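(* Let $G$ be a finite simple graph, $s\ge1$, and let $e_1,\dots,e_s$ and $f_1,\dots,f_s$ be two sequences of edges of $G$ (repetitions allowed) with $f_1\cdots f_s=e_1\cdots e_s$ as monomials. If vertices $u,v$ (possibly equal) are even-connected with respect to $e_1\cdots e_s$, then $u$ and $v$ are even-connected with respect to $f_1\cdots f_s$.
   Context: Edges $xy$ of $G$ are identified with monomials $xy$ in the polynomial ring on the vertices. Even-connection: vertices $u,v$ (possibly equal) are even-connected with respect to the sequence $e_1,\dots,e_s$ if there is a sequence of vertices $p_0,\dots,p_{2k+1}$, $k\geq1$ (vertices may repeat), with (1) $p_0=u$, $p_{2k+1}=v$; (2) for all $0\le l\le k-1$, $p_{2l+1}p_{2l+2}=e_i$ for some $i$; (3) for every $i$, $|\{l\ge0 : p_{2l+1}p_{2l+2}=e_i\}|\le|\{j: e_j=e_i\}|$; (4) for all $0\le r\le 2k$, $p_rp_{r+1}$ is an edge of $G$. *)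

(* Defs.v *)
From mathcomp Require Import all_boot.
Set Implicit Arguments. Unset Strict Implicit. Unset Printing Implicit Defensive.

Definition simple_graph (T : finType) (g : rel T) : Prop :=
  symmetric g /\ irreflexive g.

(* An edge is given by its two endpoints (x, y); it is identified with the
   monomial x*y, i.e. with the multiset {x, y}. *)
Definition edge_mono_eq (T : eqType) (a b : T * T) : bool :=
  perm_eq [:: a.1; a.2] [:: b.1; b.2].

(* The monomial e_1 ... e_s corresponds to the multiset of all endpoints. *)
Definition mono_of (T : eqType) (es : seq (T * T)) : seq T :=
  flatten [seq [:: x.1; x.2] | x <- es].

Definition mono_eq (T : eqType) (es fs : seq (T * T)) : bool :=
  perm_eq (mono_of es) (mono_of fs).

(* Even-connection of u and v with respect to the sequence es = e_1,...,e_s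
   (indices shifted to start at 0 in Rocq: p = p_0, ..., p_{2k+1}). *)
Definition even_connected (T : finType) (g : rel T) (es : seq (T * T))
    (u v : T) : Prop :=
  exists (k : nat) (p : seq T),
    1 <= k /\ size p = (2 * k + 2)%N /\
        nth u p 0 = u /\ nth u p (2 * k + 1) = v /\
        (forall l, l < k ->
           has (edge_mono_eq (nth u p (2 * l + 1), nth u p (2 * l + 2))) es) /\
        (forall i, i < size es ->
           count (fun l => edge_mono_eq (nth u p (2 * l + 1), nth u p (2 * l + 2))
                                        (nth (u, u) es i)) (iota 0 k)
           <= count (edge_mono_eq (nth (u, u) es i)) es) /\
        (forall r, r < 2 * k + 1 -> g (nth u p r) (nth u p r.+1)).

(* Main.v *)
Require Import Defs.
From mathcomp Require Import all_boot zify.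
Set Implicit Arguments. Unset Strict Implicit. Unset Printing Implicit Defensive.

Section S.
Variable T : eqType.
Local Notation r := (@edge_mono_eq T).

Lemma r_refl x : r x x. Proof. exact: perm_refl. Qed.
Lemma r_sym x y : r x y = r y x. Proof. exact: perm_sym. Qed.
Lemma r_trans x y z : r x y -> r y z -> r x z. Proof. exact: perm_trans. Qed.

Lemma mono_cat (A B : seq (T * T)) : mono_of (A ++ B) = mono_of A ++ mono_of B.
Proof. by rewrite /mono_of map_cat flatten_cat. Qed.

Lemma mono_perm (A B : seq (T * T)) : perm_eq A B -> perm_eq (mono_of A) (mono_of B).
Proof. by move=> h; apply: perm_flatten; apply: perm_map. Qed.

Lemma mono_all2 (A B : seq (T * T)) : all2 r A B -> perm_eq (mono_of A) (mono_of B).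
Proof.
elim: A B => [|a A IH] [|b B] //= /andP[hab hAB].
have := IH _ hAB => h.
apply/permP => c; rewrite /mono_of /= -!/(mono_of _).
move/permP: hab => /(_ c) /= hab; move/permP: h => /(_ c) h. lia.
Qed.

Lemma sub_ms (Q E : seq (T * T)) :
  (forall x, count (r x) Q <= count (r x) E) ->
  exists E1 E2, all2 r Q E1 /\ perm_eq E (E1 ++ E2).
Proof.
elim: Q E => [|q Q IH] E h.
  by exists [::], E.
have: has (r q) E.
  rewrite has_count; have := h q; rewrite /= r_refl; lia.
case/hasP => e eE hqe.
have hE := perm_to_rem eE.
have [E1 [E2 [h1 h2]]] : exists E1 E2, all2 r Q E1 /\ perm_eq (rem e E) (E1 ++ E2).
  apply: IH => x.
  have := h x; move/permP: hE => /(_ (r x)) /= ->.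
  have -> : r x q = r x e.
    apply/idP/idP => hx; first exact: r_trans hx hqe.
    by apply: r_trans hx _; rewrite r_sym.
  lia.
exists (e :: E1), E2; split; first by rewrite /= hqe h1.
by apply: perm_trans hE _; rewrite /= perm_cons.
Qed.

Lemma pick_end (H : seq (T * T)) u : u \in mono_of H ->
  exists h w H', perm_eq H (h :: H') /\ (h = (u, w) \/ h = (w, u)).
Proof.
elim: H => [|h H IH] //.
rewrite /mono_of /= !in_cons -/(mono_of H).
case/orP => [/eqP e|]; first by exists h, h.2, H; split => //; left; rewrite e; case: h {e}.
case/orP => [/eqP e|]; first by exists h, h.1, H; split => //; right; rewrite e; case: h {e}.
move/IH => [h' [w [H' [hp ho]]]].
exists h', w, (h :: H'); split => //.
apply/permP => a; move/permP: hp => /(_ a) /= hp; lia.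
Qed.

Lemma mono_pair (h : T * T) H' u w : h = (u, w) \/ h = (w, u) ->
  perm_eq (mono_of (h :: H')) (u :: w :: mono_of H').
Proof.
by case => ->; rewrite /mono_of //=; apply/permP => a /=; lia.
Qed.



Variable g : rel T.
Hypothesis gsym : symmetric g.

Lemma core n : forall (H F : seq (T * T)) u v, size H <= n ->
  all (fun x => g x.1 x.2) H -> all (fun x => g x.1 x.2) F ->
  perm_eq (mono_of H) (u :: v :: mono_of F) ->
  exists P F1 F2, path g u (mono_of P ++ [:: v]) /\ all2 r P F1 /\ perm_eq F (F1 ++ F2).
Proof.
elim: n => [|n IH] H F u v hs hH hF hm.
  by move: hs; rewrite leqn0 size_eq0 => /eqP HH; subst; move/perm_size: hm.
have : u \in mono_of H by rewrite (perm_mem hm) mem_head.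
move/pick_end => [h [w [H' [hp ho]]]].
have hm1 : perm_eq (mono_of H) (u :: w :: mono_of H').
  exact: perm_trans (mono_perm hp) (mono_pair _ ho).
have hm2 : perm_eq (w :: mono_of H') (v :: mono_of F).
  by rewrite -(perm_cons u); apply: perm_trans hm; rewrite perm_sym.
have hhin : h \in H by rewrite (perm_mem hp) mem_head.
have guw : g u w.
  move/allP: hH => /(_ _ hhin); case: ho => -> //=; by rewrite gsym.
have hH' : all (fun x => g x.1 x.2) H'.
  by move: hH; rewrite (perm_all _ hp) => /andP[].
case: (w =P v) => [ewv | nwv].
  exists [::], [::], F; split; first by rewrite /= -ewv guw.
  by split.
have : w \in mono_of F.
  by move: (perm_mem hm2 w); rewrite mem_head in_cons => /esym /orP[/eqP|] //.
move/pick_end => [f [z [F' [fp fo]]]].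
have hfin : f \in F by rewrite (perm_mem fp) mem_head.
have gwz : g w z.
  move/allP: hF => /(_ _ hfin); case: fo => -> //=; by rewrite gsym.
have hF' : all (fun x => g x.1 x.2) F'.
  by move: hF; rewrite (perm_all _ fp) => /andP[].
have hmF : perm_eq (mono_of F) (w :: z :: mono_of F').
  exact: perm_trans (mono_perm fp) (mono_pair _ fo).
have hm3 : perm_eq (mono_of H') (z :: v :: mono_of F').
  have : perm_eq (w :: mono_of H') (w :: z :: v :: mono_of F').
    apply: (perm_trans hm2).
    apply/permP => a; move/permP: hmF => /(_ a) /= e; clear -e; lia.
  by rewrite perm_cons.
have hsH' : size H' <= n by move: hs; rewrite (perm_size hp) /=.
have [P [F1 [F2 [hpath [ha hpF]]]]] := IH _ _ _ _ hsH' hH' hF' hm3.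
exists ((w, z) :: P), (f :: F1), F2; split; first by rewrite /= guw gwz.
split.
  rewrite /= ha andbT; case: fo => ->; first exact: r_refl.
  by rewrite /edge_mono_eq /=; apply/permP => a /=; clear; lia.
apply: perm_trans fp _; by rewrite /= perm_cons.
Qed.
End S.

Section S2.
Variable T : eqType.
Local Notation r := (@edge_mono_eq T).

Lemma mono_pairs (d : T) (p : seq T) n : forall m, m + 2 * n <= size p ->
  mono_of [seq (nth d p (m + 2 * l), nth d p (m + 2 * l).+1) | l <- iota 0 n]
  = take (2 * n) (drop m p).
Proof.
elim: n => [|n IH] m h; first by rewrite take0.
have -> : iota 0 n.+1 = 0 :: map (addn 1) (iota 0 n) by rewrite -iotaDl.
rewrite map_cons -map_comp.
rewrite (@eq_map _ _ _ (fun l => (nth d p (m.+2 + 2 * l), nth d p (m.+2 + 2 * l).+1))); last first.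
  move=> l /=; have e : m + 2 * (1 + l) = m.+2 + 2 * l by lia.
  by rewrite e.
rewrite /mono_of /= -/(mono_of _) IH; last lia.
have -> : m + 2 * 0 = m by lia.
rewrite (drop_nth d (n := m)); last lia.
rewrite (drop_nth d (n := m.+1)); last lia.
by rewrite mulnS.
Qed.

Lemma size_mono (P : seq (T * T)) : size (mono_of P) = 2 * size P.
Proof. by elim: P => //= a P IH; rewrite /mono_of /= -/(mono_of P) IH mulnS. Qed.

Lemma nth_mono (d : T) (P : seq (T * T)) l : l < size P ->
  nth d (mono_of P) (2 * l) = (nth (d, d) P l).1 /\ nth d (mono_of P) (2 * l).+1 = (nth (d, d) P l).2.
Proof.
elim: P l => // a P IH [|l] h; first by rewrite muln0.
rewrite mulnS add2n /mono_of /= -/(mono_of P); apply: IH; exact: h.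
Qed.

Lemma all2_nth (P F : seq (T * T)) (d : T * T) : all2 r P F ->
  size P = size F /\ forall l, l < size P -> r (nth d P l) (nth d F l).
Proof.
elim: P F => [|a P IH] [|b F] //= /andP[hab /IH [h1 h2]]; split; first by rewrite h1.
by case.
Qed.

Lemma all2_count (P F : seq (T * T)) (a : pred (T * T)) :
  (forall x y, r x y -> a x = a y) -> all2 r P F -> count a P = count a F.
Proof.
move=> ha; elim: P F => [|x P IH] [|y F] //= /andP[hxy /IH ->].
by rewrite (ha _ _ hxy).
Qed.
End S2.

Lemma to_ec (T : finType) (g : rel T) (fs : seq (T * T)) u v P Fu Fr :
  0 < size P -> path g u (mono_of P ++ [:: v]) -> all2 (@edge_mono_eq T) P Fu ->
  perm_eq fs (Fu ++ Fr) -> even_connected g fs u v.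
Proof.
move=> hP hpath hall hperm.
have [hsz hnth] := all2_nth (u, u) hall.
exists (size P), (u :: mono_of P ++ [:: v]).
have hpair : forall l, l < size P ->
  (nth u (u :: mono_of P ++ [:: v]) (2 * l + 1),
   nth u (u :: mono_of P ++ [:: v]) (2 * l + 2)) = nth (u, u) P l.
  move=> l hl; rewrite !addn1 addn2 /= !nth_cat size_mono.
  have [e1 e2] := nth_mono u hl.
  rewrite ltn_mul2l /= hl e1 e2 (_ : (2 * l).+1 < 2 * size P) //; last lia.
  by case: (nth _ P l).
split => //; split; first by rewrite /= size_cat size_mono /=; lia.
split => //; split.
  by rewrite addn1 /= nth_cat size_mono ltnn subnn.
split.
  move=> l hl; rewrite hpair //; apply/hasP; exists (nth (u, u) Fu l); last exact: hnth.
  by rewrite (perm_mem hperm) mem_cat mem_nth // -hsz.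
split.
  move=> i hi.
  set fi := nth (u, u) fs i.
  rewrite (eq_in_count (a2 := fun l => edge_mono_eq (nth (u, u) P l) fi)); last first.
    by move=> l; rewrite mem_iota /= => hl; rewrite hpair.
  rewrite -(count_map (nth (u, u) P) (fun q => edge_mono_eq q fi)).
  rewrite -/(mkseq _ _) mkseq_nth.
  rewrite (all2_count (a := fun q => edge_mono_eq q fi) _ hall); last first.
    move=> x y hxy; apply/idP/idP => h.
      by apply: perm_trans h; rewrite perm_sym.
    exact: perm_trans hxy h.
  move/permP: hperm => /(_ (edge_mono_eq fi)) ->; rewrite count_cat.
  rewrite (eq_count (a2 := edge_mono_eq fi)); first exact: leq_addr.
  by move=> q /=; rewrite /edge_mono_eq perm_sym.
move=> k hk.
move/(pathP u): hpath => /(_ k); rewrite size_cat size_mono /=.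
by apply; exact: hk.
Qed.

Theorem theorem6p6 (T : finType) (g : rel T) (es fs : seq (T * T)) (u v : T) :
  simple_graph g ->
  1 <= size es ->
  size fs = size es ->
  all (fun x => g x.1 x.2) es ->
  all (fun x => g x.1 x.2) fs ->
  mono_eq fs es ->
  even_connected g es u v ->
  even_connected g fs u v.
Proof.
move=> [gsym girr] hs1 hsz hes hfs hmono [k [p [hk [hsp [h0 [hend [h2 [h3 h4]]]]]]]].
pose pr := fun l => (nth u p (2 * l + 1), nth u p (2 * l + 2)).
pose Q := map pr (iota 0 k).
have hcnt : forall x, count (edge_mono_eq x) Q <= count (edge_mono_eq x) es.
  move=> x; case: (boolP (has (edge_mono_eq x) es)) => [/hasP [e eE hxe] | hn].
    have hi : index e es < size es by rewrite index_mem.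
    have := h3 _ hi; rewrite nth_index // /Q count_map.
    have -> : count (preim pr (edge_mono_eq x)) (iota 0 k)
        = count (fun l => edge_mono_eq (pr l) e) (iota 0 k).
      apply: eq_count => l /=; apply/idP/idP => hh.
        by rewrite r_sym in hh; exact: r_trans hh hxe.
      by apply: r_trans hxe _; rewrite r_sym.
    have -> : count (edge_mono_eq x) es = count (edge_mono_eq e) es.
      apply: eq_count => y; apply/idP/idP => hh.
        by apply: r_trans hh; rewrite r_sym.
      exact: r_trans hxe hh.
    by [].
  have : ~~ has (edge_mono_eq x) Q.
    apply/hasPn => q /mapP [l hl ->].
    have := h2 l; rewrite mem_iota in hl; case/(_ _)/hasP => [|e eE hle]; first by [].
    apply/negP => hxl; move/hasPn: hn => /(_ e eE); by rewrite (r_trans hxl hle).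
  by rewrite has_count -leqNgt leqn0 => /eqP ->.
have [E1 [E2 [hQE hesp]]] := sub_ms hcnt.
case: k hk hsp hend h2 h3 h4 @Q hQE hcnt => [//|k'] _ hsp hend h2 h3 h4 Q hQE hcnt.
pose x1 := nth u p 1.
have hx1Q : x1 \in mono_of Q by rewrite /Q /= /mono_of /= /pr muln0 add0n mem_head.
have hx1 : x1 \in mono_of fs.
  rewrite (perm_mem hmono) (perm_mem (mono_perm hesp)) mono_cat mem_cat.
  by rewrite -(perm_mem (mono_all2 hQE)) hx1Q.
have [f0 [z [F' [fp fo]]]] := pick_end hx1.
pose S' := [seq (nth u p (2 + 2 * l), nth u p (2 + 2 * l).+1) | l <- iota 0 k'.+1].
have hQm : mono_of Q = take (2 * k'.+1) (drop 1 p).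
  rewrite -(mono_pairs u); last by rewrite hsp; clear; lia.
  congr mono_of; apply: eq_map => l; rewrite /pr.
  have -> : 2 * l + 1 = 1 + 2 * l by clear; lia.
  by have -> : 2 * l + 2 = (1 + 2 * l).+1 by clear; lia.
have hSm : mono_of S' = take (2 * k'.+1) (drop 2 p).
  by rewrite mono_pairs // hsp; clear; lia.
have key : perm_eq (x1 :: mono_of S') (v :: mono_of Q).
  rewrite hSm hQm take_oversize; last by rewrite size_drop hsp; clear; lia.
  have e1 : drop 1 p = x1 :: drop 2 p.
    rewrite (drop_nth u) // hsp; clear; lia.
  rewrite -e1.
  rewrite -{1}(take_oversize (n := (2 * k'.+1).+1) (s := drop 1 p)); last first.
    by rewrite size_drop hsp; clear; lia.
  rewrite (take_nth u); last by rewrite size_drop hsp; clear; lia.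
  rewrite nth_drop add1n -hend.
  have -> : (2 * k'.+1).+1 = 2 * k'.+1 + 1 by rewrite addn1.
  by rewrite perm_rcons.
have hH' : perm_eq (mono_of (S' ++ E2)) (z :: v :: mono_of F').
  apply/permP => a; rewrite mono_cat count_cat.
  have k1 : a x1 + count a (mono_of S') = a v + count a (mono_of Q).
    by move/permP: key => /(_ a).
  move/permP: (mono_all2 hQE) => /(_ a) k2.
  move/permP: (mono_perm hesp) => /(_ a); rewrite mono_cat count_cat => k3.
  move/permP: hmono => /(_ a) k4.
  move/permP: (perm_trans (mono_perm fp) (mono_pair F' fo)) => /(_ a) /= k5.
  change (count a (mono_of S') + count a (mono_of E2) = a z + (a v + count a (mono_of F'))).
  clear -k1 k2 k3 k4 k5; move: k1 k2 k3 k4 k5.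
  set c1 := count a (mono_of S'); set c2 := count a (mono_of E2).
  set c3 := count a (mono_of Q); set c4 := count a (mono_of E1).
  set c5 := count a (mono_of es); set c6 := count a (mono_of fs).
  set c7 := count a (mono_of F').
  set b1 := nat_of_bool (a x1); set b2 := nat_of_bool (a z); set b3 := nat_of_bool (a v).
  clear; lia.
have hallH : all (fun x => g x.1 x.2) (S' ++ E2).
  rewrite all_cat; apply/andP; split.
    apply/allP => q /mapP [l]; rewrite mem_iota => hl -> /=.
    apply: h4; clear -hl; lia.
  apply/allP => q qE; move/allP: hes; apply.
  by rewrite (perm_mem hesp) mem_cat qE orbT.
have hf0 : f0 \in fs by rewrite (perm_mem fp) mem_head.
have hallF : all (fun x => g x.1 x.2) F'.
  by move: hfs; rewrite (perm_all _ fp) => /andP[].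
have [P [F1 [F2 [hpath [hall hpF]]]]] := core gsym (leqnn _) hallH hallF hH'.
apply: (@to_ec _ _ _ _ _ ((x1, z) :: P) (f0 :: F1) F2) => //.
- rewrite /mono_of /= -/(mono_of P); apply/andP; split.
    by have := h4 0 isT; rewrite h0.
  apply/andP; split => //.
  by move/allP: hfs => /(_ _ hf0); case: fo => -> //=; rewrite gsym.
- rewrite /= hall andbT; case: fo => ->; first exact: r_refl.
  by rewrite /edge_mono_eq /=; apply/permP => a /=; clear; lia.
- by apply: perm_trans fp _; rewrite /= perm_cons.
Qed.
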